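(* There is an absolute constant $c$ such that for every BST $T$ and every set $F$ of $k$ nodes of $T$ containing the root of $T$, the extended hand $E(T,F)$ consists of at most $c\,k$ intervals.
   Context: Let $T$ be a BST and $F$ a set of $k$ nodes (fingers) including the root. $S(T,F)$ is the Steiner tree of $F$ in $T$ (the minimal connected subtree containing $F$). The set of pseudofingers $P(T,F)$ consists of $F$ together with all nodes of degree $3$ in $S(T,F)$. For pseudofingers $x,y$ with $x$ an ancestor of $y$ such that the path between them contains no other pseudofinger, the tendon $\tau_{x,y}$ is the set of nodes strictly between $x$ and $y$ on this path. Its half tendons are $\tau^{<}_{x,y}=\{z\in\tau_{x,y}: z<y\}$ and $\tau^{>}_{x,y}=\{z\in\tau_{x,y}:z>y\}$; $H(T,F)$ is the set of all (nonempty) half tendons. A half tendon $\tau$ is identified with the interval $[\min\tau,\max\tau]$ and a pseudofinger $f$ with $[f,f]$. The extended hand is $E(T,F)=P(T,F)\cup H(T,F)$, viewed as a set of intervals. *)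

(* Defs.v *)
(* Binary search trees with natural-number keys; a node is
   identified with its key. *)
From mathcomp Require Import all_boot.
Set Implicit Arguments. Unset Strict Implicit. Unset Printing Implicit Defensive.

Inductive tree := Leaf | Node of tree & nat & tree.

Fixpoint keys (t : tree) : seq nat :=
  if t is Node l k r then keys l ++ k :: keys r else [::].

Definition bst (t : tree) : bool := sorted ltn (keys t).

Definition root_seq (t : tree) : seq nat :=
  if t is Node _ k _ then [:: k] else [::].

(* the subtree of t rooted at the node with key x (Leaf if x is not a node) *)
Fixpoint subtree_at (t : tree) (x : nat) : tree :=
  if t is Node l k r then
    if k == x then t else
    if x \in keys l then subtree_at l x else subtree_at r x
  else Leaf.

(* anc t x y : x is an ancestor of y, or x = y *)
Definition anc (t : tree) (x y : nat) : bool :=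
  (x \in keys t) && (y \in keys (subtree_at t x)).

Definition children (t : tree) (z : nat) : seq nat :=
  if subtree_at t z is Node l _ r then root_seq l ++ root_seq r else [::].

(* z lies on the (unique) tree path between u and v *)
Definition on_path (t : tree) (u v z : nat) : bool :=
  (z \in keys t) &&
  ((anc t z u (+) anc t z v) ||
   [&& anc t z u, anc t z v & ~~ has (fun c => anc t c u && anc t c v) (children t z)]).

Definition steiner (t : tree) (F : seq nat) : seq nat :=
  [seq z <- keys t | has (fun u => has (fun v => on_path t u v z) F) F].

Definition deg_in (t : tree) (S : seq nat) (z : nat) : nat :=
  count (fun c => c \in S) (children t z) +
  has (fun p => (p \in S) && (z \in children t p)) (keys t).

Definition pseudofingers (t : tree) (F : seq nat) : seq nat :=
  [seq z <- keys t | (z \in F) ||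
     ((z \in steiner t F) && (deg_in t (steiner t F) z == 3))].

Definition tendon (t : tree) (x y : nat) : seq nat :=
  [seq z <- keys t | [&& anc t x z, anc t z y, z != x & z != y]].

Definition tendon_pair (t : tree) (F : seq nat) (x y : nat) : bool :=
  [&& x \in pseudofingers t F, y \in pseudofingers t F, x != y, anc t x y &
      all (fun z => z \notin pseudofingers t F) (tendon t x y)].

Definition half_lo (t : tree) (x y : nat) : seq nat := [seq z <- tendon t x y | z < y].
Definition half_hi (t : tree) (x y : nat) : seq nat := [seq z <- tendon t x y | y < z].

(* the interval [min s, max s] of a (nonempty) set of keys *)
Definition interval_of (s : seq nat) : nat * nat :=
  (\big[minn/head 0 s]_(z <- s) z, \max_(z <- s) z).

Definition half_tendon_intervals (t : tree) (F : seq nat) : seq (nat * nat) :=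
  flatten [seq flatten [seq [seq interval_of s | s <- [:: half_lo t x y; half_hi t x y]
                                               & s != [::]]
                       | y <- pseudofingers t F & tendon_pair t F x y]
          | x <- pseudofingers t F].

Definition extended_hand (t : tree) (F : seq nat) : seq (nat * nat) :=
  undup ([seq (f, f) | f <- pseudofingers t F] ++ half_tendon_intervals t F).

(* Main.v *)
Require Import Defs.
From mathcomp Require Import all_boot zify.
Set Warnings "-notation-overridden".

Definition pw (t : tree) := pairwise ltn (keys t).

Lemma bst_pw t : bst t = pw t.
Proof. by rewrite /bst /pw sorted_pairwise //; exact: ltn_trans. Qed.

Lemma node_pw l k r : pw (Node l k r) ->
  [/\ pw l, pw r, forall x, x \in keys l -> x < k & forall x, x \in keys r -> k < x].
Proof.
rewrite /pw /= pairwise_cat pairwise_cons allrel_consr => /and3P[/andP[Hl _] Hpl /andP[Hk Hpr]].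
split => // x Hx; first by move/allP: Hl => /(_ x Hx).
by move/allP: Hk => /(_ x Hx).
Qed.

Arguments node_pw {l k r}.

Lemma keys_sub t z : {subset keys (subtree_at t z) <= keys t}.
Proof.
elim: t => [|l IHl k r IHr] //= x.
case: eqP => _ //. rewrite mem_cat inE.
case: ifP => _ Hx; first by rewrite IHl.
by rewrite IHr ?orbT.
Qed.

Arguments keys_sub {t z}.

Lemma sub_l l k r x : pw (Node l k r) -> x \in keys l ->
  subtree_at (Node l k r) x = subtree_at l x.
Proof.
case/node_pw => _ _ Hl _ Hx /=. have := Hl x Hx.
case: eqP => [->|_]; first by rewrite ltnn.
by rewrite Hx.
Qed.

Lemma sub_r l k r x : pw (Node l k r) -> x \in keys r ->
  subtree_at (Node l k r) x = subtree_at r x.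
Proof.
case/node_pw => _ _ Hl Hr Hx /=. have := Hr x Hx.
case: eqP => [->|_]; first by rewrite ltnn.
case: ifP => // /Hl H1 H2. lia.
Qed.

Arguments sub_l {l k r x}.
Arguments sub_r {l k r x}.

Lemma pw_sub t z : pw t -> pw (subtree_at t z).
Proof.
elim: t => [|l IHl k r IHr] //= H.
have [Hl Hr _ _] := node_pw H.
case: eqP => _ //. case: ifP => _; auto.
Qed.

Lemma sub_sub t z x : pw t -> z \in keys t -> x \in keys (subtree_at t z) ->
  subtree_at t x = subtree_at (subtree_at t z) x.
Proof.
elim: t => [|l IHl k r IHr] //= H.
have [Hl Hr Hlk Hrk] := node_pw H.
case: eqP => [->|Hkz] //.
rewrite mem_cat inE.
case: ifP => Hzl.
  move=> _ Hx. have Hxl := keys_sub _ Hx.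
  have -> : (k == x) = false by apply/eqP => e; have := Hlk _ Hxl; rewrite e ltnn.
  rewrite Hxl; exact: IHl.
move=> /orP[//|/orP[/eqP Hzk|Hzr]]; first by rewrite Hzk in Hkz.
move=> Hx. have Hxr := keys_sub _ Hx.
have -> : (k == x) = false by apply/eqP => e; have := Hrk _ Hxr; rewrite e ltnn.
have -> : (x \in keys l) = false by apply/negP => /Hlk; have := Hrk _ Hxr; lia.
exact: IHr.
Qed.

Lemma sub_node t z : z \in keys t -> exists l r, subtree_at t z = Node l z r.
Proof.
elim: t => [|l IHl k r IHr] //=.
case: eqP => [->|Hkz]; first by eauto.
rewrite mem_cat inE. case: ifP => Hzl; first by auto.
case/orP=> [//|/orP[/eqP Hzk|Hzr]]; [by rewrite Hzk in Hkz| auto].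
Qed.

Lemma anc_comp t x x' y : pw t -> x \in keys t -> x' \in keys t ->
  y \in keys (subtree_at t x) -> y \in keys (subtree_at t x') ->
  (x' \in keys (subtree_at t x)) || (x \in keys (subtree_at t x')).
Proof.
elim: t => [|l IHl k r IHr] //= H.
have [Hl Hr Hlk Hrk] := node_pw H.
case: (k =P x) => [->|Hkx]; first by move=> _ Hx'; rewrite /= Hx'.
case: (k =P x') => [->|Hkx']; first by move=> Hx _; rewrite /= Hx orbT.
rewrite !mem_cat !inE.
have Hnk : forall w, w != k -> [|| w \in keys l, w == k | w \in keys r] ->
   (w \in keys l) || (w \in keys r).
  by move=> w /negbTE ->.
move=> Hx0 Hx'0.
have Hx := Hnk x (introN eqP (fun e => Hkx (esym e))) Hx0.
have Hx' := Hnk x' (introN eqP (fun e => Hkx' (esym e))) Hx'0.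
case: (boolP (x \in keys l)) => Hxl; case: (boolP (x' \in keys l)) => Hx'l.
- by apply: IHl.
- rewrite (negbTE Hx'l) /= in Hx'.
  move=> Hy1 Hy2. have := ltn_trans (Hlk _ (keys_sub _ Hy1)) (Hrk _ (keys_sub _ Hy2)). by rewrite ltnn.
- rewrite (negbTE Hxl) /= in Hx.
  move=> Hy1 Hy2. have := ltn_trans (Hlk _ (keys_sub _ Hy2)) (Hrk _ (keys_sub _ Hy1)). by rewrite ltnn.
- rewrite (negbTE Hxl) /= in Hx; rewrite (negbTE Hx'l) /= in Hx'. exact: IHr.
Qed.

Fixpoint cnt (F : seq nat) (t : tree) : seq nat :=
  if t is Node l k r then
    cnt F l ++ cnt F r ++
    (if has (fun f => f \in keys l) F && has (fun f => f \in keys r) F then [:: k] else [::])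
  else [::].

Lemma cnt_in F t z l r : z \in keys t -> subtree_at t z = Node l z r ->
  has (fun f => f \in keys l) F -> has (fun f => f \in keys r) F -> z \in cnt F t.
Proof.
elim: t => [|l0 IHl k r0 IHr] //=.
case: eqP => [-> _ [-> <-] -> ->|Hkz]; first by rewrite !mem_cat inE eqxx !orbT.
rewrite mem_cat inE. case: ifP => Hzl.
  by move=> _ Hs Hl Hr; rewrite mem_cat (IHl Hzl Hs Hl Hr).
case/orP=> [//|/orP[/eqP Hzk|Hzr]]; first by rewrite Hzk in Hkz.
by move=> Hs Hl Hr; rewrite !mem_cat (IHr Hzr Hs Hl Hr) orbT.
Qed.

Lemma cnt_bound F t : pw t ->
  size (cnt F t) + (0 < count (fun f => f \in keys t) F) <= count (fun f => f \in keys t) F.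
Proof.
elim: t => [|l IHl k r IHr] /=; first by rewrite count_pred0.
move=> H; have [Hl Hr Hlk Hrk] := node_pw H.
have Hg : count (fun f => f \in keys l) F + count (fun f => f \in keys r) F
          <= count (fun f => f \in keys l ++ k :: keys r) F.
  rewrite -count_predUI.
  have -> : count (predI (fun f => f \in keys l) (fun f => f \in keys r)) F = 0.
    apply/eqP; rewrite -leqn0 leqNgt -has_count; apply/hasPn => f _ /=.
    apply/negP => /andP[a b]. have := ltn_trans (Hlk _ a) (Hrk _ b). by rewrite ltnn.
  rewrite addn0; apply: sub_count => f /=; rewrite mem_cat inE.
  by case/orP => ->; rewrite ?orbT.
have := IHl Hl; have := IHr Hr.
rewrite !size_cat !has_count.
move: Hg.
set gl := count _ F; set gr := count _ F; set g := count _ F.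
clearbody gl gr g; clear IHl IHr Hlk Hrk H.
case: (posnP gl) => [->|pl]; case: (posnP gr) => [->|pr]; rewrite /= ?pl ?pr /=; lia.
Qed.
Arguments sub_node {t z}.
Arguments sub_sub {t z x}.
Arguments cnt_in {F t z l r}.

Lemma finger_of t F c : c \in steiner t F -> exists2 f, f \in F & f \in keys (subtree_at t c).
Proof.
rewrite mem_filter => /andP[/hasP[u Hu /hasP[v Hv]]] + _.
rewrite /on_path /anc => /andP[_ H].
have : ((c \in keys t) && (u \in keys (subtree_at t c))) ||
       ((c \in keys t) && (v \in keys (subtree_at t c))).
  by move: H; case: (_ && _); case: (_ && _).
by case/orP => /andP[_ ?]; [exists u | exists v].
Qed.

Arguments finger_of {t F c}.

Lemma deg3_cnt t F z : pw t -> z \in keys t ->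
  deg_in t (steiner t F) z == 3 -> z \in cnt F t.
Proof.
move=> Hpw Hz.
have [l [r Hs]] := sub_node Hz.
rewrite /deg_in /children Hs.
set b := has _ _. have : b <= 1 by apply: leq_b1.
move: b => b Hb.
case: l Hs => [|ll rl lr]; case: r => [|rl' rr rr'] Hs /=;
  try by (case: (_ \in _) => /=; case: b Hb => //=; case: (_ \in _)).
case Hrl : (rl \in steiner t F); case Hrr : (rr \in steiner t F) => /=;
  try by case: b Hb.
move=> _.
have Hpws : pw (Node (Node ll rl lr) z (Node rl' rr rr')) by rewrite -Hs; apply: pw_sub.
apply: (cnt_in Hz Hs).
- have [f Hf Hfk] := finger_of Hrl.
  apply/hasP; exists f => //.
  have Hin : rl \in keys (subtree_at t z) by rewrite Hs /= mem_cat /= mem_cat inE eqxx orbT.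
  rewrite (sub_sub Hpw Hz Hin) Hs (sub_l Hpws) /= ?eqxx // in Hfk.
  by rewrite /= mem_cat inE eqxx orbT.
- have [f Hf Hfk] := finger_of Hrr.
  apply/hasP; exists f => //.
  have Hin2 : rr \in keys (Node rl' rr rr') by rewrite /= mem_cat inE eqxx orbT.
  have Hin : rr \in keys (subtree_at t z) by rewrite Hs -/(keys (Node rl' rr rr')) /= mem_cat inE Hin2 !orbT.
  rewrite (sub_sub Hpw Hz Hin) Hs (sub_r Hpws Hin2) /= eqxx in Hfk.
  exact: Hfk.
Qed.
Arguments anc_comp {t x x' y}.

Lemma size_flat_map (A B : Type) (f : A -> seq B) s :
  size (flatten (map f s)) = \sum_(x <- s) size (f x).
Proof. by elim: s => [|x s IH]; rewrite ?big_nil ?big_cons //= size_cat IH. Qed.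

Lemma sum_count (A : Type) (a : pred A) s : \sum_(x <- s) (a x : nat) = count a s.
Proof. by elim: s => [|x s IH]; rewrite ?big_nil ?big_cons //= IH. Qed.

Lemma count_le1 (A : eqType) (a : pred A) s : uniq s ->
  (forall x y, x \in s -> y \in s -> a x -> a y -> x = y) -> count a s <= 1.
Proof.
move=> Hu Ha; rewrite -size_filter.
case Ef: (filter a s) => [|x0 s'] //.
have : x0 \in filter a s by rewrite Ef inE eqxx.
rewrite mem_filter => /andP[ax0 x0s].
rewrite -Ef; apply: (@uniq_leq_size _ _ [:: x0]); first exact: filter_uniq.
move=> y; rewrite mem_filter inE => /andP[ay ys]; apply/eqP; exact: Ha.
Qed.

Lemma pf_uniq t F : pw t -> uniq (pseudofingers t F).
Proof. move=> H; apply: filter_uniq; apply: (pairwise_uniq (r:=ltn)) => //; exact: ltnn. Qed.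

Lemma pf_keys t F z : z \in pseudofingers t F -> z \in keys t.
Proof. by rewrite mem_filter => /andP[]. Qed.

Lemma tp_unique t F x x' y : pw t -> tendon_pair t F x y -> tendon_pair t F x' y -> x = x'.
Proof.
move=> Hpw /and5P[Hx Hy Hxy /andP[Hkx Ha] Hall] /and5P[Hx' _ Hx'y /andP[Hkx' Ha'] Hall'].
case: (x =P x') => // Hne; exfalso.
have Hkx1 := Hkx; have Hkx1' := Hkx'.
case/orP: (anc_comp Hpw Hkx1 Hkx1' Ha Ha') => Hc.
- have Ht : x' \in tendon t x y.
    have Hne' : x' != x by apply/eqP => e; apply: Hne.
    by rewrite mem_filter Hkx1' /anc Hkx1 Hc Hkx1' Ha' Hx'y Hne'.
  by move/allP: Hall => /(_ _ Ht); rewrite Hx'.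
- have Ht : x \in tendon t x' y.
    have Hne' : x != x' by apply/eqP => e; apply: Hne.
    by rewrite mem_filter Hkx1 /anc Hkx1' Hc Hkx1 Ha Hxy Hne'.
  by move/allP: Hall' => /(_ _ Ht); rewrite Hx.
Qed.

Lemma H_bound t F : pw t ->
  size (half_tendon_intervals t F) <= 2 * size (pseudofingers t F).
Proof.
move=> Hpw; set P := pseudofingers t F.
rewrite /half_tendon_intervals -/P size_flat_map.
apply: (@leq_trans (\sum_(x <- P) \sum_(y <- P) 2 * tendon_pair t F x y)).
  apply: leq_sum => x _; rewrite size_flat_map big_filter big_mkcond /=.
  apply: leq_sum => y _; case: (tendon_pair t F x y) => //=.
  case: (_ != _); case: (_ != _) => //.
rewrite exchange_big /=.
have -> : 2 * size P = \sum_(y <- P) 2.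
  by elim: (P) => [|a s IH]; rewrite ?big_nil ?big_cons //= -IH mulnS.
apply: leq_sum => y _; rewrite -big_distrr /=.
apply: (@leq_trans (2 * 1)) => //; rewrite leq_mul2l /= sum_count.
apply: count_le1; first exact: pf_uniq.
move=> x x' _ _; exact: tp_unique.
Qed.

Lemma P_bound t F : pw t -> size (pseudofingers t F) <= 2 * size F.
Proof.
move=> Hpw.
have Hu : uniq (keys t) by apply: (pairwise_uniq (r:=ltn)) => //; exact: ltnn.
rewrite /pseudofingers size_filter.
set a1 := (fun z => z \in F).
set a2 := (fun z => (z \in steiner t F) && (deg_in t (steiner t F) z == 3)).
apply: (@leq_trans (count a1 (keys t) + count a2 (keys t))).
  rewrite -count_predUI; apply: leq_addr.
have H1 : count a1 (keys t) <= size F.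
  rewrite -size_filter; apply: uniq_leq_size; first exact: filter_uniq.
  by move=> z; rewrite mem_filter => /andP[].
have H2 : count a2 (keys t) <= size F.
  rewrite -size_filter.
  apply: (@leq_trans (size (cnt F t))).
    apply: uniq_leq_size; first exact: filter_uniq.
    move=> z; rewrite mem_filter => /andP[/andP[_ Hd] Hz]; exact: deg3_cnt.
  apply: leq_trans (leq_addr _ _) (leq_trans (@cnt_bound F t Hpw) (count_size _ _)).
lia.
Qed.

Theorem lemma14 :
  exists c : nat, forall (t : tree) (F : seq nat),
    bst t -> uniq F -> {subset F <= keys t} ->
    (forall r, r \in root_seq t -> r \in F) ->
    size (extended_hand t F) <= c * size F.
Proof.
exists 6 => t F Hb _ _ _.
have Hpw : pw t by rewrite -bst_pw.
rewrite /extended_hand.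
apply: (leq_trans (size_undup _)).
rewrite size_cat size_map.
have := @H_bound t F Hpw. have := @P_bound t F Hpw.
move=> A B; apply: (leq_trans (leq_add (leqnn _) B)).
rewrite -{1}(mul1n (size _)) -mulnDl.
by apply: leq_trans (leq_mul (leqnn 3) A) _; rewrite mulnA.
Qed.
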